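(* Let $\rho$ be a density matrix on $\mathbb{C}^d$ and $H$ a Hermitian operator on $\mathbb{C}^d$, and suppose $F_Q>0$. Then for every integer $n\ge 1$, $$\mathcal{E}_n^{(\mathsf{Kry})}\coloneqq\frac{\left|B_n^{(\mathsf{Kry})}-F_Q\right|}{F_Q}\le 4\left[\frac{\sqrt{\kappa(\rho)}-1}{\sqrt{\kappa(\rho)}+1}\right]^{2n},$$ where $\kappa(\rho)=p_{\max}/p_{\min}$ if $\rho$ is full rank and $\kappa(\rho)=2p_{\max}/p_{\min}$ otherwise, with $p_{\max}$ and $p_{\min}$ the largest and smallest nonzero eigenvalues of $\rho$. In particular, $\mathcal{E}_n^{(\mathsf{Kry})}$ decreases exponentially to zero as $n$ increases.
   Context: Write $\rho=\sum_k p_k|k\rangle\langle k|$ (spectral decomposition, orthonormal eigenbasis $\{|k\rangle\}$). The quantum Fisher information (QFI) of $\rho$ with respect to $H$ is $F_Q=2\sum_{k,l:\,p_k+p_l>0}\frac{(p_k-p_l)^2}{p_k+p_l}|\langle k|H|l\rangle|^2$. Let $\mathcal{X}$ be the real vector space of Hermitian operators $X$ with $\langle k|X|l\rangle=0$ whenever $p_k=p_l=0$, equipped with the inner product $\langle X,Y\rangle_\rho=\mathrm{tr}[\rho(XY+YX)/2]$ and norm $\|X\|_\rho=\sqrt{\langle X,X\rangle_\rho}$. Let $\mathcal{R}_\rho(X)=\frac12(\rho X+X\rho)$. The symmetric logarithmic derivative (SLD) $L$ is the unique $L\in\mathcal{X}$ with $\mathcal{R}_\rho(L)=i[\rho,H]$;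 one has $F_Q=\|L\|_\rho^2$. The Krylov subspace of order $n$ is $\mathcal{K}_n=\mathrm{span}\{i[\rho,H],\mathcal{R}_\rho(i[\rho,H]),\dots,\mathcal{R}_\rho^{n-1}(i[\rho,H])\}\subseteq\mathcal{X}$ (real span). Let $L_n\in\mathcal{K}_n$ be the element of $\mathcal{K}_n$ closest to $L$ in the norm $\|\cdot\|_\rho$ (i.e., the $\langle\cdot,\cdot\rangle_\rho$-orthogonal projection of $L$ onto $\mathcal{K}_n$). The $n$-th Krylov bound is $B_n^{(\mathsf{Kry})}=\|L_n\|_\rho^2$. *)

(* Defs.v *)
From HB Require Import structures.
From mathcomp Require Import all_boot all_order all_algebra.
Set Implicit Arguments.
Unset Strict Implicit.
Unset Printing Implicit Defensive.
Import Order.TTheory GRing.Theory Num.Theory.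
Local Open Scope ring_scope.
Local Open Scope sesquilinear_scope.

Section Krylov.
Context {C : numClosedFieldType} {d : nat}.
Implicit Types (U X Y H rho : 'M[C]_d) (p : 'I_d -> C).

(* rho = sum_k p_k |k><k|, where |k> is the k-th column of the unitary U *)
Definition spec_mx U p : 'M[C]_d := U *m diag_mx (\row_k p k) *m U ^t*.

Definition mel U X (k l : 'I_d) : C := (U ^t* *m X *m U) k l.

Definition QFI U p H : C :=
  2 * \sum_(k < d) \sum_(l < d | 0 < p k + p l)
        (p k - p l) ^+ 2 / (p k + p l) * `|mel U H k l| ^+ 2.

Definition in_calX U p X : Prop :=
  X \is hermsymmx /\
  forall k l : 'I_d, p k = 0 -> p l = 0 -> mel U X k l = 0.

Definition ip_rho rho X Y : C := \tr (rho *m (2%:R^-1 *: (X *m Y + Y *m X))).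
Definition norm_rho rho X : C := sqrtC (ip_rho rho X X).

Definition R_rho rho X : 'M[C]_d := 2%:R^-1 *: (rho *m X + X *m rho).

Definition icomm rho H : 'M[C]_d := 'i *: (rho *m H - H *m rho).

Definition is_SLD U p rho H L : Prop :=
  in_calX U p L /\ R_rho rho L = icomm rho H.

Definition in_krylov rho H (n : nat) X : Prop :=
  exists c : 'I_n -> C, (forall j, c j \is Num.real) /\
    X = \sum_(j < n) c j *: iter j (R_rho rho) (icomm rho H).

Definition is_krylov_approx rho H (n : nat) L Ln : Prop :=
  in_krylov rho H n Ln /\
  forall Y, in_krylov rho H n Y -> norm_rho rho (L - Ln) <= norm_rho rho (L - Y).

Definition p_max p : C := \big[Num.max/0]_(k < d) p k.
Definition p_min p : C := \big[Num.min/p_max p]_(k < d | p k != 0) p k.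

Definition kappa p : C :=
  if [forall k, p k != 0] then p_max p / p_min p else 2%:R * p_max p / p_min p.

End Krylov.

(* Main.v *)
Require Import Defs.
From HB Require Import structures.
From mathcomp Require Import all_boot all_order all_algebra.
From mathcomp Require Import ring lra zify.
Set Implicit Arguments.
Unset Strict Implicit.
Unset Printing Implicit Defensive.
Import Order.TTheory GRing.Theory Num.Theory.
Local Open Scope ring_scope.
Local Open Scope sesquilinear_scope.

Lemma pOB {C : numClosedFieldType} (p q : {poly C}) : p \is a polyOver Num.real -> q \is a polyOver Num.real ->
  p - q \is a polyOver Num.real.
Proof. by move=> /polyOverP hp /polyOverP hq; apply/polyOverP=> i; rewrite coefB rpredB. Qed.
Lemma pOD {C : numClosedFieldType} (p q : {poly C}) : p \is a polyOver Num.real -> q \is a polyOver Num.real ->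
  p + q \is a polyOver Num.real.
Proof. by move=> /polyOverP hp /polyOverP hq; apply/polyOverP=> i; rewrite coefD rpredD. Qed.
Lemma pOM {C : numClosedFieldType} (p q : {poly C}) : p \is a polyOver Num.real -> q \is a polyOver Num.real ->
  p * q \is a polyOver Num.real.
Proof.
move=> /polyOverP hp /polyOverP hq; apply/polyOverP=> i; rewrite coefM.
by apply: rpred_sum => j _; rewrite rpredM.
Qed.
Lemma pOZ {C : numClosedFieldType} (c : C) (p : {poly C}) : c \is Num.real -> p \is a polyOver Num.real ->
  c *: p \is a polyOver Num.real.
Proof. by move=> hc /polyOverP hp; apply/polyOverP=> i; rewrite coefZ rpredM. Qed.
Lemma pOC {C : numClosedFieldType} (c : C) : c \is Num.real -> c%:P \is a polyOver Num.real.
Proof. by move=> hc; rewrite polyOverC. Qed.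
Lemma pOX {C : numClosedFieldType} : 'X \is a polyOver (@Num.real C).
Proof. by apply/polyOverP=> i; rewrite coefX; case: (_ == _); rewrite ?real1 ?real0. Qed.

Fixpoint chebP {C : numClosedFieldType} (Y : {poly C}) (m : nat) : {poly C} :=
  match m with
  | 0 => 1
  | m1.+1 => match m1 with
             | 0 => Y
             | m'.+1 => 2%:R *: (Y * chebP Y m1) - chebP Y m'
             end
  end.

Lemma chebP_eval {C : numClosedFieldType} (Y : {poly C}) (x z w : C) m : z * w = 1 -> Y.[x] = (z + w) / 2%:R ->
  (chebP Y m).[x] = (z ^+ m + w ^+ m) / 2%:R.
Proof.
move=> zw Yx.
have two0 : (2%:R : C) != 0 by rewrite pnatr_eq0.
suff: (chebP Y m).[x] = (z ^+ m + w ^+ m) / 2%:R /\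
      (chebP Y m.+1).[x] = (z ^+ m.+1 + w ^+ m.+1) / 2%:R by case.
elim: m => [|m [IH1 IH2]].
  split; first by rewrite /= hornerC expr0 -mulr2n -[1 *+ 2]/(2%:R) divff.
  by rewrite /= Yx !expr1.
split=> //.
rewrite /= hornerD hornerN hornerZ hornerM -/(chebP Y m.+1) -/(chebP Y m) IH1 IH2 Yx.
apply/eqP; rewrite -subr_eq0; apply/eqP.
transitivity ((z * w - 1) * (z ^+ m + w ^+ m) / 2%:R); last by rewrite zw subrr !mul0r.
by rewrite !exprS; field.
Qed.

Lemma chebP_size {C : numClosedFieldType} (Y : {poly C}) m : (size Y <= 2)%N -> (size (chebP Y m) <= m.+1)%N.
Proof.
move=> hY.
suff: (size (chebP Y m) <= m.+1)%N /\ (size (chebP Y m.+1) <= m.+2)%N by case.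
elim: m => [|m [IH1 IH2]].
  by split=> //=; rewrite size_polyC; case: (_ != _).
split=> //.
rewrite /= -/(chebP Y m.+1) -/(chebP Y m).
apply: (leq_trans (size_polyD _ _)); rewrite size_polyN geq_max; apply/andP; split.
  apply: (leq_trans (size_scale_leq _ _)); apply: (leq_trans (size_polyMleq _ _)).
  move: hY IH2; set s1 := size Y; set s2 := size (chebP Y m.+1); lia.
by apply: (leq_trans IH1); lia.
Qed.

Lemma chebP_real {C : numClosedFieldType} (Y : {poly C}) m : Y \is a polyOver Num.real -> chebP Y m \is a polyOver Num.real.
Proof.
move=> hY.
suff: chebP Y m \is a polyOver Num.real /\ chebP Y m.+1 \is a polyOver Num.real by case.
elim: m => [|m [IH1 IH2]]; first by split=> //=; rewrite polyOverC rpred1.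
split=> //=; rewrite -/(chebP Y m.+1) -/(chebP Y m).
by rewrite pOB // pOZ ?realn // pOM.
Qed.

Lemma cheb_exists {C : numClosedFieldType} (a b : C) n : 0 < a -> a <= b -> (0 < n)%N ->
  exists q : {poly C}, [/\ q \is a polyOver Num.real, (size q <= n.+1)%N, q.[0] = 1 &
    forall x, a <= x -> x <= b ->
      `|q.[x]| <= 2%:R * ((sqrtC (b / a) - 1) / (sqrtC (b / a) + 1)) ^+ n].
Proof.
move=> a0 ab n0.
have a_ne0 : a != 0 by rewrite gt_eqF.
have ar : a \is Num.real by rewrite gtr0_real.
have br : b \is Num.real by rewrite gtr0_real // (lt_le_trans a0 ab).
have [eab|nab] := eqVneq a b.
  subst b; exists (1 - a^-1 *: 'X); split.
  - by rewrite pOB ?pOC ?real1 // pOZ ?pOX // rpredV.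
  - apply: (leq_trans (size_polyD _ _)); rewrite size_polyN geq_max size_polyC.
    apply/andP; split; first by case: (_ != _); case: n n0.
    by apply: (leq_trans (size_scale_leq _ _)); rewrite size_polyX.
  - by rewrite hornerD hornerN hornerZ hornerX mulr0 subr0 hornerC.
  move=> x h1 h2; have -> : x = a by apply/le_anti; rewrite h1 h2.
  rewrite hornerD hornerN hornerZ hornerX hornerC mulVf // subrr normr0.
  rewrite divff // sqrtC1 subrr mul0r expr0n; case: n n0 => // n _ /=.
  by rewrite mulr0.
have altb : a < b by rewrite lt_neqAle nab ab.
have ba0 : b - a != 0 by rewrite subr_eq0 eq_sym.
set k := b / a; set t := sqrtC k.
have k1 : 1 < k by rewrite /k ltr_pdivlMr // mul1r.
have t1 : 1 < t by rewrite /t -sqrtC1 ltr_sqrtC // qualifE /= ?ler01 // ltW // (lt_trans ltr01).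
have t0 : 0 < t by rewrite (lt_trans ltr01).
have tm1 : t - 1 != 0 by rewrite subr_eq0 gt_eqF.
have tp1 : t + 1 != 0 by rewrite gt_eqF // addr_gt0.
have tt : t ^+ 2 = k by rewrite sqrtCK.
have two0 : (2%:R : C) != 0 by rewrite pnatr_eq0.
set Y : {poly C} := (b - a)^-1 *: ((b + a)%:P - 2%:R *: 'X).
have Yx x : Y.[x] = (b + a - 2%:R * x) / (b - a).
  by rewrite hornerZ hornerD hornerN hornerZ hornerX hornerC mulrC.
have Yr : Y \is a polyOver Num.real.
  by rewrite pOZ ?rpredV ?rpredB // pOB ?pOC ?rpredD // pOZ ?realn // pOX.
have Ys : (size Y <= 2)%N.
  apply: (leq_trans (size_scale_leq _ _)); apply: (leq_trans (size_polyD _ _)).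
  rewrite size_polyN geq_max (leq_trans (size_polyC_leq1 _)) //=.
  by apply: (leq_trans (size_scale_leq _ _)); rewrite size_polyX.
set P := chebP Y n.
set z0 := (t + 1) / (t - 1); set w0 := (t - 1) / (t + 1).
have zw0 : z0 * w0 = 1 by rewrite /z0 /w0; field; rewrite tm1 tp1.
have Y0 : Y.[0] = (z0 + w0) / 2%:R.
  rewrite Yx mulr0 subr0.
  transitivity ((t ^+ 2 + 1) / (t ^+ 2 - 1)); last first.
    by rewrite /z0 /w0; field; rewrite tm1 tp1 tt subr_eq0 gt_eqF.
  by rewrite tt /k; field; rewrite a_ne0 mulN1r /= ba0.
have P0 : P.[0] = (z0 ^+ n + w0 ^+ n) / 2%:R by exact: chebP_eval.
have tp0 : 0 < t + 1 by apply: addr_gt0 => //; exact: ltr01.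
have tm0 : 0 < t - 1 by rewrite subr_gt0.
have z0p : 0 < z0 by apply: divr_gt0.
have w0p : 0 <= w0 by apply: ltW; apply: divr_gt0.
have P0p : z0 ^+ n / 2%:R <= P.[0].
  rewrite P0 ler_pM2r ?invr_gt0 ?ltr0n // lerDl. exact: (exprn_ge0 _ w0p).
have P0pos : 0 < P.[0] by apply: lt_le_trans P0p; rewrite divr_gt0 ?exprn_gt0 ?ltr0n.
have P0r : P.[0] \is Num.real by rewrite gtr0_real.
exists (P.[0]^-1 *: P); split.
- by rewrite pOZ ?rpredV // chebP_real.
- by apply: (leq_trans (size_scale_leq _ _)); apply: chebP_size.
- by rewrite hornerZ mulVf // gt_eqF.
move=> x ax xb.
have xr : x \is Num.real by rewrite gtr0_real // (lt_le_trans a0 ax).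
set y := Y.[x].
have yr : y \is Num.real by rewrite /y Yx rpredM ?rpredV ?rpredB ?rpredD ?rpredM ?realn.
have y2 : 0 <= 1 - y ^+ 2.
  have -> : 1 - y ^+ 2 = 4%:R * (x - a) * (b - x) / (b - a) ^+ 2.
    by rewrite /y Yx; field; rewrite ba0.
  by rewrite divr_ge0 ?exprn_ge0 ?mulr_ge0 ?ler0n ?subr_ge0 // ltW // subr_gt0.
set s := sqrtC (1 - y ^+ 2).
have sr : s \is Num.real by rewrite sqrtC_real.
set z := y + 'i * s; set w := y - 'i * s.
have zw : z * w = 1.
  transitivity (y ^+ 2 - 'i ^+ 2 * s ^+ 2); first by rewrite /z /w; ring.
  by rewrite sqrCi sqrtCK; ring.
have yzw : Y.[x] = (z + w) / 2%:R by rewrite -/y /z /w; field.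
have wc : w = z^* by rewrite /z /w rmorphD rmorphM /= conjCi (CrealP yr) (CrealP sr) mulNr.
have nz : `|z| = 1.
  apply/eqP; rewrite -sqrp_eq1 //; apply/eqP; by rewrite normCK -wc.
have nw : `|w| = 1 by rewrite wc norm_conjC.
have Px : `|P.[x]| <= 1.
  rewrite /P (chebP_eval _ zw yzw) normrM normfV normr_nat.
  rewrite ler_pdivrMr ?ltr0n // mul1r.
  apply: (le_trans (ler_normD _ _)).
  by rewrite !normrX nz nw !expr1n.
rewrite hornerZ normrM normfV (gtr0_norm P0pos).
apply: (le_trans (y := P.[0]^-1)).
  by rewrite -[X in _ <= X]mulr1; apply: ler_wpM2l => //; rewrite invr_ge0; apply: ltW.

apply: (le_trans (y := (z0 ^+ n / 2%:R)^-1)).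
  by rewrite lef_pV2 // qualifE /= divr_gt0 ?exprn_gt0 ?ltr0n.
have zwn : z0 ^+ n * w0 ^+ n = 1 by rewrite -exprMn zw0 expr1n.
rewrite invfM invrK mulrC.
have -> : (z0 ^+ n)^-1 = w0 ^+ n.
  by apply: (mulfI (x := z0 ^+ n)); rewrite ?expf_neq0 ?gt_eqF // divff ?expf_neq0 ?gt_eqF // zwn.
by [].
Qed.

Definition cj {C : numClosedFieldType} {d : nat} (U X : 'M[C]_d) : 'M[C]_d := U^t* *m X *m U.
Definition ww {C : numClosedFieldType} {d : nat} (p : 'I_d -> C) (k l : 'I_d) : C :=
  (p k + p l) / 2%:R.

Lemma unit_l (C : numClosedFieldType) d (U : 'M[C]_d) : U \is unitarymx -> U *m U^t* = 1%:M.
Proof. by move/unitarymxP. Qed.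
Lemma unit_r (C : numClosedFieldType) d (U : 'M[C]_d) : U \is unitarymx -> U^t* *m U = 1%:M.
Proof. by move=> hU; have := mulmxKtV (1%:M : 'M[C]_d) hU erefl; rewrite mul1mx. Qed.

Lemma cjM (C : numClosedFieldType) d (U X Y : 'M[C]_d) : U \is unitarymx ->
  cj U (X *m Y) = cj U X *m cj U Y.
Proof. by move=> hU; rewrite /cj -!mulmxA (mulmxA U) unit_l // mul1mx. Qed.
Lemma cjD (C : numClosedFieldType) d (U X Y : 'M[C]_d) : cj U (X + Y) = cj U X + cj U Y.
Proof. by rewrite /cj mulmxDr mulmxDl. Qed.
Lemma cjB (C : numClosedFieldType) d (U X Y : 'M[C]_d) : cj U (X - Y) = cj U X - cj U Y.
Proof. by rewrite /cj mulmxBr mulmxBl. Qed.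
Lemma cjZ (C : numClosedFieldType) d (U X : 'M[C]_d) c : cj U (c *: X) = c *: cj U X.
Proof. by rewrite /cj -scalemxAr -scalemxAl. Qed.
Lemma cj_sum (C : numClosedFieldType) d (U : 'M[C]_d) n (c : 'I_n -> C) (M : 'I_n -> 'M[C]_d) k l :
  cj U (\sum_(j < n) c j *: M j) k l = \sum_(j < n) c j * cj U (M j) k l.
Proof.
rewrite /cj mulmx_sumr mulmx_suml summxE; apply: eq_bigr => j _.
by rewrite -scalemxAr -scalemxAl mxE.
Qed.
Lemma cj_spec (C : numClosedFieldType) d (U : 'M[C]_d) p : U \is unitarymx ->
  cj U (spec_mx U p) = diag_mx (\row_k p k).
Proof.
move=> hU; rewrite /cj /spec_mx !mulmxA unit_r // mul1mx -mulmxA unit_r // mulmx1.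
by [].
Qed.
Lemma tr_cj (C : numClosedFieldType) d (U X : 'M[C]_d) : U \is unitarymx ->
  \tr (cj U X) = \tr X.
Proof. by move=> hU; rewrite /cj mxtrace_mulC mulmxA unit_l // mul1mx. Qed.

Lemma mxZE (C : numClosedFieldType) d (a : C) (M : 'M[C]_d) k l : (a *: M) k l = a * M k l.
Proof. by rewrite mxE. Qed.
Lemma mxDE (C : numClosedFieldType) d (M N : 'M[C]_d) k l : (M + N) k l = M k l + N k l.
Proof. by rewrite mxE. Qed.
Lemma mxBE (C : numClosedFieldType) d (M N : 'M[C]_d) k l : (M - N) k l = M k l - N k l.
Proof. by rewrite !mxE. Qed.
Lemma diagL (C : numClosedFieldType) d (p : 'I_d -> C) (M : 'M[C]_d) k l :
  (diag_mx (\row_k p k) *m M) k l = p k * M k l.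
Proof. by rewrite mul_diag_mx !mxE. Qed.
Lemma diagR (C : numClosedFieldType) d (p : 'I_d -> C) (M : 'M[C]_d) k l :
  (M *m diag_mx (\row_k p k)) k l = M k l * p l.
Proof. by rewrite mul_mx_diag !mxE. Qed.

Lemma cj_R (C : numClosedFieldType) d (U X : 'M[C]_d) p k l : U \is unitarymx ->
  cj U (R_rho (spec_mx U p) X) k l = ww p k l * cj U X k l.
Proof.
move=> hU; rewrite /R_rho cjZ cjD (@cjM _ _ U (spec_mx U p)) // (@cjM _ _ U X) // cj_spec // ?mxZE ?mxDE ?mxBE diagL diagR /ww.
by field.
Qed.
Lemma cj_icomm (C : numClosedFieldType) d (U X : 'M[C]_d) p k l : U \is unitarymx ->
  cj U (icomm (spec_mx U p) X) k l = 'i * (p k - p l) * cj U X k l.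
Proof.
move=> hU; rewrite /icomm cjZ cjB (@cjM _ _ U (spec_mx U p)) // (@cjM _ _ U X) // cj_spec // mxZE mxBE diagL diagR.
by ring.
Qed.
Lemma cj_iter (C : numClosedFieldType) d (U X : 'M[C]_d) p k l j : U \is unitarymx ->
  cj U (iter j (R_rho (spec_mx U p)) X) k l = ww p k l ^+ j * cj U X k l.
Proof.
move=> hU; elim: j => [|j IH]; first by rewrite expr0 mul1r.
by rewrite iterS cj_R // IH exprS mulrA.
Qed.

Lemma ip_cj (C : numClosedFieldType) d (U X Y : 'M[C]_d) p : U \is unitarymx ->
  ip_rho (spec_mx U p) X Y =
  \sum_(k < d) \sum_(l < d) ww p k l * cj U X k l * cj U Y l k.
Proof.
move=> hU; rewrite /ip_rho -(tr_cj _ hU) (@cjM _ _ U (spec_mx U p)) // cjZ cjD (@cjM _ _ U X) // (@cjM _ _ U Y) // cj_spec //.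

set X' := cj U X; set Y' := cj U Y.
rewrite /mxtrace; under eq_bigr => k _ do rewrite diagL mxZE mxDE !mxE.
have E2 : \sum_(k < d) \sum_(l < d) (p k / 2%:R * (Y' k l * X' l k)) =
          \sum_(k < d) \sum_(l < d) (p l / 2%:R * (X' k l * Y' l k)).
  by rewrite exchange_big /=; apply: eq_bigr => k _; apply: eq_bigr => l _; ring.
transitivity (\sum_(k < d) \sum_(l < d) (p k / 2%:R * (X' k l * Y' l k)) +
   \sum_(k < d) \sum_(l < d) (p k / 2%:R * (Y' k l * X' l k))).
  rewrite -big_split; apply: eq_bigr => k _ /=; rewrite -!mulr_sumr; ring.
rewrite E2 -big_split; apply: eq_bigr => k _ /=; rewrite -big_split; apply: eq_bigr => l _ /=.
rewrite /ww; ring.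
Qed.

Lemma max_real (C : numClosedFieldType) (x y : C) : x \is Num.real -> y \is Num.real ->
  [/\ Num.max x y \is Num.real, x <= Num.max x y & y <= Num.max x y].
Proof.
move=> xr yr; rewrite /Order.max; case: ifP => h; split => //; first exact: ltW.
by rewrite real_leNgt // h.
Qed.
Lemma min_real (C : numClosedFieldType) (x y : C) : x \is Num.real -> y \is Num.real ->
  [/\ Num.min x y \is Num.real, Num.min x y <= x & Num.min x y <= y].
Proof.
move=> xr yr; rewrite /Order.min; case: ifP => h; split => //; first exact: ltW.
by rewrite real_leNgt // h.
Qed.

Lemma bigmax_ge (C : numClosedFieldType) (I : eqType) (r : seq I) (P : pred I) (F : I -> C) x0 :
  x0 \is Num.real -> (forall i, F i \is Num.real) ->
  \big[Num.max/x0]_(i <- r | P i) F i \is Num.real /\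
  forall k, k \in r -> P k -> F k <= \big[Num.max/x0]_(i <- r | P i) F i.
Proof.
move=> x0r Fr; elim: r => [|i r [IHr IHk]]; first by rewrite big_nil; split=> // k; rewrite in_nil.
rewrite big_cons; case: ifP => Pi.
  have [m1 m2 m3] := max_real (Fr i) IHr; split=> // k; rewrite in_cons => /orP [/eqP -> //|kr Pk].
  exact: le_trans (IHk k kr Pk) m3.
split=> // k; rewrite in_cons => /orP [/eqP -> |kr Pk]; first by rewrite Pi.
exact: IHk.
Qed.
Lemma bigmin_le (C : numClosedFieldType) (I : eqType) (r : seq I) (P : pred I) (F : I -> C) x0 :
  x0 \is Num.real -> (forall i, F i \is Num.real) ->
  \big[Num.min/x0]_(i <- r | P i) F i \is Num.real /\
  forall k, k \in r -> P k -> \big[Num.min/x0]_(i <- r | P i) F i <= F k.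
Proof.
move=> x0r Fr; elim: r => [|i r [IHr IHk]]; first by rewrite big_nil; split=> // k; rewrite in_nil.
rewrite big_cons; case: ifP => Pi.
  have [m1 m2 m3] := min_real (Fr i) IHr; split=> // k; rewrite in_cons => /orP [/eqP -> //|kr Pk].
  exact: le_trans m3 (IHk k kr Pk).
split=> // k; rewrite in_cons => /orP [/eqP -> |kr Pk]; first by rewrite Pi.
exact: IHk.
Qed.

Lemma pmax_ge (C : numClosedFieldType) d (p : 'I_d -> C) : (forall k, 0 <= p k) ->
  forall k, p k <= p_max p.
Proof.
move=> hp k; have [_ h] := @bigmax_ge C _ (index_enum 'I_d) xpredT p 0 (real0 _) (fun i => ger0_real (hp i)).
by apply: h; rewrite ?mem_index_enum.
Qed.
Lemma pmin_le (C : numClosedFieldType) d (p : 'I_d -> C) : (forall k, 0 <= p k) ->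
  forall k, p k != 0 -> p_min p <= p k.
Proof.
move=> hp k pk.
have mr : p_max p \is Num.real.
  by have [] := @bigmax_ge C _ (index_enum 'I_d) xpredT p 0 (real0 _) (fun i => ger0_real (hp i)).
have [_ h] := @bigmin_le C _ (index_enum 'I_d) (fun k => p k != 0) p (p_max p) mr (fun i => ger0_real (hp i)).
by apply: h; rewrite ?mem_index_enum.
Qed.
Lemma pmin_gt0 (C : numClosedFieldType) d (p : 'I_d -> C) : (forall k, 0 <= p k) ->
  forall k0, p k0 != 0 -> 0 < p_min p.
Proof.
move=> hp k0 pk0.
have pm : 0 < p_max p.
  by apply: (lt_le_trans _ (pmax_ge hp k0)); rewrite lt_def pk0 hp.
rewrite /p_min; apply: (big_ind (fun x => 0 < x)) => //.
  by move=> x y x0 y0; rewrite /Order.min; case: ifP.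
by move=> i pi; rewrite lt_def pi hp.
Qed.

Definition cc {C : numClosedFieldType} {d} (U H : 'M[C]_d) p k l :=
  cj U (icomm (spec_mx U p) H) k l.
Definition mm {C : numClosedFieldType} {d} (U H : 'M[C]_d) p k l := `|cc U H p k l| ^+ 2.
Definition Qf {C : numClosedFieldType} {d} (U H : 'M[C]_d) p (f g : C -> C) :=
  \sum_(k < d) \sum_(l < d) ww p k l * f (ww p k l) * g (ww p k l) * mm U H p k l.
Definition kf {C : numClosedFieldType} n (c : 'I_n -> C) (x : C) := \sum_(j < n) c j * x ^+ j.

Lemma herm_cj (C : numClosedFieldType) d (U H : 'M[C]_d) k l :
  H \is hermsymmx -> cj U H l k = (cj U H k l)^*.
Proof.
move=> /is_hermitianmxP hH.
have e : (cj U H)^t* = cj U H.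
  rewrite /cj !trmx_mul !map_mxM trmxCK -mulmxA; congr (_ *m (_ *m _)).
  apply/matrixP => i j; transitivity (((-1) ^+ false *: H ^t* ) i j); last by rewrite -hH.
  by rewrite !mxE expr0 mul1r.

by rewrite -[in LHS]e !mxE.
Qed.

Lemma cc_conj (C : numClosedFieldType) d (U H : 'M[C]_d) p k l :
  U \is unitarymx -> H \is hermsymmx -> (forall k, 0 <= p k) ->
  cc U H p l k = (cc U H p k l)^*.
Proof.
move=> hU hH hp; rewrite /cc !cj_icomm // herm_cj //.
rewrite !rmorphM /= rmorphB /= conjCi (CrealP (ger0_real (hp k))) (CrealP (ger0_real (hp l))).
ring.
Qed.

Lemma ww_sym (C : numClosedFieldType) d (p : 'I_d -> C) k l : ww p l k = ww p k l.
Proof. by rewrite /ww addrC. Qed.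

Lemma ww_real (C : numClosedFieldType) d (p : 'I_d -> C) k l :
  (forall k, 0 <= p k) -> ww p k l \is Num.real.
Proof. by move=> hp; rewrite /ww rpredM ?rpredV ?realn ?rpredD // ger0_real. Qed.

Lemma ww_ge0 (C : numClosedFieldType) d (p : 'I_d -> C) k l :
  (forall k, 0 <= p k) -> 0 <= ww p k l.
Proof. by move=> hp; rewrite /ww divr_ge0 ?ler0n ?addr_ge0. Qed.

Lemma ip_form (C : numClosedFieldType) d (U H X Y : 'M[C]_d) p (f g : C -> C) :
  U \is unitarymx -> H \is hermsymmx -> (forall k, 0 <= p k) ->
  (forall k l, cj U X k l = f (ww p k l) * cc U H p k l) ->
  (forall k l, cj U Y k l = g (ww p k l) * cc U H p k l) ->
  ip_rho (spec_mx U p) X Y = Qf U H p f g.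
Proof.
move=> hU hH hp hX hY; rewrite ip_cj //; apply: eq_bigr => k _; apply: eq_bigr => l _.
by rewrite hX hY (ww_sym p k l) (@cc_conj _ _ U H p k l hU hH hp) /mm normCK; ring.
Qed.

Lemma Q_ge0 (C : numClosedFieldType) d (U H : 'M[C]_d) p (f : C -> C) :
  (forall k, 0 <= p k) -> (forall k l, f (ww p k l) \is Num.real) -> 0 <= Qf U H p f f.
Proof.
move=> hp hf; apply: sumr_ge0 => k _; apply: sumr_ge0 => l _.
rewrite -mulrA -mulrA mulr_ge0 ?ww_ge0 // mulrA mulr_ge0 ?exprn_ge0 //.
by rewrite -expr2 real_exprn_even_ge0.
Qed.

Lemma Q_real (C : numClosedFieldType) d (U H : 'M[C]_d) p (f g : C -> C) :
  (forall k, 0 <= p k) -> (forall k l, f (ww p k l) \is Num.real) ->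
  (forall k l, g (ww p k l) \is Num.real) -> Qf U H p f g \is Num.real.
Proof.
move=> hp hf hg; apply: rpred_sum => k _; apply: rpred_sum => l _.
apply: rpredM; [apply: rpredM; [apply: rpredM; [exact: ww_real | exact: hf] | exact: hg] | apply: ger0_real; exact: exprn_ge0].
Qed.

Lemma Q_ext (C : numClosedFieldType) d (U H : 'M[C]_d) p (f g f' g' : C -> C) :
  (forall k l, f (ww p k l) = f' (ww p k l)) -> (forall k l, g (ww p k l) = g' (ww p k l)) ->
  Qf U H p f g = Qf U H p f' g'.
Proof.
by move=> hf hg; apply: eq_bigr => k _; apply: eq_bigr => l _; rewrite hf hg.
Qed.

Lemma Q_exp (C : numClosedFieldType) d (U H : 'M[C]_d) p (f g : C -> C) u :
  Qf U H p (fun x => f x + u * g x) (fun x => f x + u * g x) =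
  Qf U H p f f + 2%:R * u * Qf U H p f g + u ^+ 2 * Qf U H p g g.
Proof.
rewrite /Qf !mulr_sumr -!big_split; apply: eq_bigr => k _ /=.
rewrite !mulr_sumr -!big_split; apply: eq_bigr => l _ /=; ring.
Qed.

Lemma kf_real (C : numClosedFieldType) n (c : 'I_n -> C) x :
  (forall j, c j \is Num.real) -> x \is Num.real -> kf c x \is Num.real.
Proof. by move=> hc hx; apply: rpred_sum => j _; rewrite rpredM ?rpredX. Qed.

Lemma krylov_form (C : numClosedFieldType) d (U H : 'M[C]_d) p n (c : 'I_n -> C) k l :
  U \is unitarymx ->
  cj U (\sum_(j < n) c j *: iter j (R_rho (spec_mx U p)) (icomm (spec_mx U p) H)) k l =
  kf c (ww p k l) * cc U H p k l.
Proof.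
move=> hU; rewrite cj_sum /kf mulr_suml; apply: eq_bigr => j _.
by rewrite cj_iter // mulrA.
Qed.

Lemma L_form (C : numClosedFieldType) d (U H L : 'M[C]_d) p k l :
  U \is unitarymx -> (forall k, 0 <= p k) -> is_SLD U p (spec_mx U p) H L ->
  cj U L k l = (ww p k l)^-1 * cc U H p k l.
Proof.
move=> hU hp [[_ hX] hR].
have e : ww p k l * cj U L k l = cc U H p k l by rewrite /cc -hR cj_R.
have [w0|w0] := eqVneq (ww p k l) 0.
  have : p k + p l == 0.
    by move/eqP: w0; rewrite /ww mulf_eq0 invr_eq0 pnatr_eq0 orbF => /eqP ->.
  rewrite paddr_eq0 // => /andP [/eqP pk /eqP pl].
  by rewrite w0 invr0 mul0r; apply: hX.
by rewrite -e mulKf.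
Qed.

Lemma QFI_form (C : numClosedFieldType) d (U H : 'M[C]_d) p :
  U \is unitarymx -> (forall k, 0 <= p k) ->
  QFI U p H = Qf U H p (fun x => x^-1) (fun x => x^-1).
Proof.
move=> hU hp; rewrite /QFI /Qf mulr_sumr; apply: eq_bigr => k _.
rewrite big_mkcond mulr_sumr; apply: eq_bigr => l _ /=.
have -> : mm U H p k l = (p k - p l) ^+ 2 * `|mel U H k l| ^+ 2.
  rewrite /mm /cc cj_icomm // !normrM normCi mul1r exprMn real_normK //.
  by rewrite rpredB // ger0_real.
case: ifP => h.
  rewrite /ww; field; rewrite gt_eqF //= pnatr_eq0 //.
have : p k + p l == 0.
  by move: (addr_ge0 (hp k) (hp l)); rewrite le_eqVlt h orbF eq_sym.
move/eqP=> s0; rewrite /ww s0 mul0r !mul0r mulr0 //.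
Qed.

Lemma kf_q (C : numClosedFieldType) n (q : {poly C}) x :
  (size q <= n.+1)%N -> q.[0] = 1 ->
  kf (fun j : 'I_n => - q`_j.+1) x * x = 1 - q.[x].
Proof.
move=> hs h0; rewrite (horner_coef_wide _ hs) big_ord_recl /= expr0 mulr1 -horner_coef0 h0.
rewrite /kf mulr_suml opprD addrA subrr add0r -sumrN; apply: eq_bigr => j _.
by rewrite exprS /bump /=; ring.
Qed.

Unset Implicit Arguments.
Theorem theorem1 (C : numClosedFieldType) (d : nat) (rho H U : 'M[C]_d)
    (p : 'I_d -> C) (n : nat) (L Ln : 'M[C]_d) :
  U \is unitarymx ->
  (forall k, 0 <= p k) -> \sum_(k < d) p k = 1 ->
  rho = spec_mx U p ->
  H \is hermsymmx ->
  0 < QFI U p H ->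
  (1 <= n)%N ->
  is_SLD U p rho H L ->
  is_krylov_approx rho H n L Ln ->
  `|norm_rho rho Ln ^+ 2 - QFI U p H| / QFI U p H
    <= 4%:R * ((sqrtC (kappa p) - 1) / (sqrtC (kappa p) + 1)) ^+ (2 * n).
Proof.
move=> hU hp hsum -> hH hF n1 hSLD [[c0 [hc0 eLn]] hmin].
set w := ww p.
set Q := Qf U H p.
have wr k l : w k l \is Num.real by apply: ww_real.
have Lf k l : cj U L k l = (w k l)^-1 * cc U H p k l by apply: L_form.
have Lnf k l : cj U Ln k l = kf c0 (w k l) * cc U H p k l by rewrite eLn krylov_form.
set g := kf c0.
set e := fun x => x^-1 - g x.
have gr k l : g (w k l) \is Num.real by apply: kf_real.
have er k l : e (w k l) \is Num.real by rewrite /e rpredB ?rpredV.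
have hB : norm_rho (spec_mx U p) Ln ^+ 2 = Q g g by rewrite /norm_rho sqrtCK (ip_form hU hH hp Lnf Lnf).
have hQF : QFI U p H = Q (fun x => x^-1) (fun x => x^-1) by apply: QFI_form.
have Emin (c' : 'I_n -> C) : (forall j, c' j \is Num.real) ->
    Q e e <= Q (fun x => x^-1 - kf c' x) (fun x => x^-1 - kf c' x).
  move=> hc'.
  set Y := \sum_(j < n) c' j *: iter j (R_rho (spec_mx U p)) (icomm (spec_mx U p) H).
  have hY : in_krylov (spec_mx U p) H n Y by exists c'.
  have f1 k l : cj U (L - Ln) k l = e (w k l) * cc U H p k l.
    by rewrite cjB mxBE Lf Lnf /e mulrBl.
  have f2 k l : cj U (L - Y) k l = (fun x => x^-1 - kf c' x) (w k l) * cc U H p k l.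
    by rewrite cjB mxBE Lf krylov_form // mulrBl.
  rewrite -ler_sqrtC ?qualifE /=; first last.
  - apply: Q_ge0 => // k l; rewrite rpredB ?rpredV //; exact: kf_real.
  - exact: Q_ge0.
  rewrite /Q -(ip_form hU hH hp f1 f1) -(ip_form hU hH hp f2 f2).
  exact: hmin Y hY.
have B0ge : 0 <= Q g g by apply: Q_ge0.
have hA : Q e g = 0.
  set A := Q e g; set B0 := Q g g.
  have Ar : A \is Num.real by apply: Q_real.
  have B0p : 0 < B0 + 1 by apply: ltr_wpDl B0ge ltr01.
  have B01 : B0 + 1 != 0 by rewrite gt_eqF.
  set u := - A / (B0 + 1).
  have ur : u \is Num.real by rewrite rpredM ?rpredN ?rpredV ?rpredD ?real1 // ger0_real.
  set c' := fun j => (1 - u) * c0 j.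
  have hc' j : c' j \is Num.real by rewrite rpredM ?rpredB ?real1.
  have eqQ : Q (fun x => x^-1 - kf c' x) (fun x => x^-1 - kf c' x) =
             Q (fun x => e x + u * g x) (fun x => e x + u * g x).
    have pt x : x^-1 - kf c' x = e x + u * g x.
      rewrite /e /g /kf mulr_sumr -addrA; congr (_ + _).
      rewrite -!sumrN -big_split; apply: eq_bigr => j _ /=; rewrite /c'; ring.
    by apply: Q_ext => k l; rewrite pt.
  have := Emin c' hc'; rewrite eqQ /Q.
  rewrite Q_exp -/Q -addrA lerDl.
  have -> : 2%:R * u * A + u ^+ 2 * B0 = - (A ^+ 2 * (B0 + 2%:R) / (B0 + 1) ^+ 2).
    by rewrite /u; field.
  rewrite oppr_ge0 => hle.
  have hge : 0 <= A ^+ 2 * (B0 + 2%:R) / (B0 + 1) ^+ 2.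
    apply: divr_ge0; [apply: mulr_ge0; [exact: real_exprn_even_ge0 | by rewrite addr_ge0 ?ler0n] | exact: (exprn_ge0 _ (ltW B0p))].
  have /eqP : A ^+ 2 * (B0 + 2%:R) / (B0 + 1) ^+ 2 = 0 by apply/le_anti; rewrite hle hge.
  rewrite !mulf_eq0 invr_eq0 !expf_eq0 /= (negbTE B01) orbF.
  have -> : (B0 + 2%:R == 0) = false by rewrite gt_eqF // (ltr_wpDl B0ge) ?ltr0n.
  by rewrite orbF orbb => /eqP.
have hsplit : Q (fun x => x^-1) (fun x => x^-1) = Q e e + Q g g.
  rewrite /Q (@Q_ext _ _ U H p _ _ (fun x => e x + 1 * g x) (fun x => e x + 1 * g x)).
    by rewrite Q_exp -/Q hA mulr0 addr0 expr1n mul1r.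
  - by move=> k l; rewrite /e mul1r subrK.
  - by move=> k l; rewrite /e mul1r subrK.
have Qee0 : 0 <= Q e e by apply: Q_ge0.
have hmain : `|norm_rho (spec_mx U p) Ln ^+ 2 - QFI U p H| = Q e e.
  rewrite hB hQF hsplit.
  have -> : Q g g - (Q e e + Q g g) = - Q e e by ring.
  by rewrite normrN ger0_norm.
have [k0 pk0] : exists k0, p k0 != 0.
  case: (pickP (fun k => p k != 0)) => [k0 h|h]; first by exists k0.
  exfalso; move: hsum; rewrite big1 => [/eqP|k _]; first by rewrite eq_sym oner_eq0.
  by move: (h k) => /= /negbFE /eqP.
set pm := p_max p; set pn := p_min p.
have pn0 : 0 < pn by apply: (pmin_gt0 hp pk0).
have pnm : pn <= pm by apply: le_trans (pmin_le hp pk0) (pmax_ge hp k0).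
have pn1 : pn != 0 by rewrite gt_eqF.
set a := if [forall k, p k != 0] then pn else pn / 2%:R.
have a0 : 0 < a by rewrite /a; case: ifP => _ //; rewrite divr_gt0 ?ltr0n.
have ab : a <= pm.
  rewrite /a; case: ifP => _ //; apply: le_trans pnm.
  by rewrite ler_pdivrMr ?ltr0n // ler_peMr ?ler1n // ltW.
have hk : kappa p = pm / a.
  by rewrite /kappa /a; case: ifP => _ //; rewrite -/pm -/pn; field; rewrite pn1.
have range k l : mm U H p k l != 0 -> a <= w k l /\ w k l <= pm.
  move=> hm.
  have pkl : p k != p l.
    apply: contraNneq hm => e'.
    by rewrite /mm /cc cj_icomm // e' subrr mulr0 mul0r normr0 expr0n.
  split; last first.
    rewrite /w /ww ler_pdivrMr ?ltr0n //.
    apply: le_trans (lerD (pmax_ge hp k) (pmax_ge hp l)) _.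
    by rewrite mulr_natr mulr2n.
  rewrite /a /w /ww; case: ifP => hfull.
    move/forallP: hfull => hfull.
    rewrite ler_pdivlMr ?ltr0n // mulr_natr mulr2n.
    by apply: lerD; apply: pmin_le.
  rewrite ler_pM2r ?invr_gt0 ?ltr0n //.
  have [pk|pk] := eqVneq (p k) 0.
    rewrite pk add0r; apply: pmin_le => //; by rewrite -pk eq_sym.
  by apply: le_trans (pmin_le hp pk) _; rewrite lerDl.
have [q [hqr hqs hq0 hqb]] := cheb_exists a0 ab n1.
set r := (sqrtC (pm / a) - 1) / (sqrtC (pm / a) + 1).
set c' := fun j : 'I_n => - q`_j.+1.
have hc' j : c' j \is Num.real by rewrite rpredN; apply: (polyOverP hqr).
have hE := Emin c' hc'.
have bound : Q (fun x => x^-1 - kf c' x) (fun x => x^-1 - kf c' x) <=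
    4%:R * r ^+ (2 * n) * Q (fun x => x^-1) (fun x => x^-1).
  rewrite /Q /Qf mulr_sumr; apply: ler_sum => k _; rewrite mulr_sumr; apply: ler_sum => l _.
  have [hm|hm] := eqVneq (mm U H p k l) 0; first by rewrite hm !mulr0.
  have [hak hkb] := range k l hm.
  rewrite -/(w k l); set x := w k l.
  have x0 : 0 < x by apply: lt_le_trans a0 hak.
  have xn0 : x != 0 by rewrite gt_eqF.
  have kq := kf_q x hqs hq0.
  have ee : x^-1 - kf c' x = q.[x] / x.
    have -> : kf c' x = (1 - q.[x]) / x by rewrite -kq mulfK.
    by field.
  rewrite ee.
  have -> : x * (q.[x] / x) * (q.[x] / x) * mm U H p k l = q.[x] ^+ 2 * (x^-1 * mm U H p k l).
    by field.
  have -> : x * x^-1 * x^-1 * mm U H p k l = x^-1 * mm U H p k l by field.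
  apply: ler_wpM2r.
    by apply: mulr_ge0; [rewrite invr_ge0 ltW | exact: exprn_ge0].
  have hq' := hqb x hak hkb.
  have qr : q.[x] \is Num.real by apply: rpred_horner => //; exact: wr.
  rewrite -(real_normK qr).
  have -> : 4%:R * r ^+ (2 * n) = (2%:R * r ^+ n) ^+ 2.
    by rewrite [RHS]exprMn -natrX -exprM mulnC.
  apply: lerXn2r => //; rewrite qualifE /=; first exact: normr_ge0.
  exact: le_trans (normr_ge0 _) hq'.
rewrite hmain hk ler_pdivrMr // hQF.
exact: le_trans hE bound.
Qed.
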